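(* Every unit of $A(n,d,\underline{q})$ is of the form $\gamma h_1^{m_1}\cdots h_n^{m_n}$ with $\gamma\in\Bbbk^*$ and $m_1,\ldots,m_n\in\mathbb{Z}$.
   Context: Let $\Bbbk$ be a field, $n,d$ positive integers, and $\underline{q}=(q_1,\ldots,q_n)\in(\Bbbk^* )^n$ with $q_i^d\neq1$ for all $i$. Write $a_d(X)=X^d-1$. The algebra $A(n,d,\underline{q})$ is the $\Bbbk$-algebra generated by $x_i,y_i,h_i,h_i^{-1}$ ($1\le i\le n$) subject to the relations $h_ih_i^{-1}=h_i^{-1}h_i=1$, $x_ih_i=q_ih_ix_i$, $y_ih_i=q_i^{-1}h_iy_i$, $x_iy_i=a_d(q_ih_i)=(q_ih_i)^d-1$, $y_ix_i=a_d(h_i)=h_i^d-1$, and, for $i\neq j$, each of $h_i^{\pm1},x_i,y_i$ commutes with each of $h_j^{\pm1},x_j,y_j$. (Equivalently, it is the tensor product over $\Bbbk$ of the generalized Weyl algebras $\Bbbk[h_i^{\pm1}](\sigma_i,h_i^d-1)$ with $\sigma_i(h_i)=q_ih_i$.) *)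

(* Defs.v *)
From HB Require Import structures.
From mathcomp Require Import all_boot all_order all_algebra.
Set Implicit Arguments. Unset Strict Implicit. Unset Printing Implicit Defensive.
Import Order.TTheory GRing.Theory Num.Theory.
Local Open Scope ring_scope.

Definition alg_hom (k : fieldType) (A B : algType k) (f : A -> B) : Prop :=
  [/\ f 1 = 1,
      forall a b, f (a + b) = f a + f b,
      forall a b, f (a * b) = f a * f b &
      forall (c : k) a, f (c *: a) = c *: f a].

(* The defining relations of A(n,d,q) for elements x,y,h,hi (hi = h^{-1})
   of a k-algebra B; a_d(X) = X^d - 1. *)
Definition Arels (k : fieldType) (n d : nat) (q : 'I_n -> k) (B : algType k)
    (x y h hi : 'I_n -> B) : Prop :=
  (forall i, h i * hi i = 1 /\ hi i * h i = 1) /\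
  [/\ (forall i, x i * h i = (q i *: h i) * x i),
      (forall i, y i * h i = ((q i)^-1 *: h i) * y i),
      (forall i, x i * y i = (q i *: h i) ^+ d - 1),
      (forall i, y i * x i = (h i) ^+ d - 1) &
      (forall i j, i != j ->
         forall a b, a \in [:: h i; hi i; x i; y i] ->
                     b \in [:: h j; hi j; x j; y j] -> a * b = b * a)].

(* A (with x,y,h,hi) is the k-algebra presented by generators x_i,y_i,h_i,h_i^{-1}
   and the relations above: the relations hold, and (A,x,y,h,hi) satisfies the
   universal property of the presented algebra. *)
Definition is_A (k : fieldType) (n d : nat) (q : 'I_n -> k) (A : algType k)
    (x y h hi : 'I_n -> A) : Prop :=
  [/\ Arels d q x y h hi,
      (forall (B : algType k) (x' y' h' hi' : 'I_n -> B),
          Arels d q x' y' h' hi' ->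
          exists f : A -> B, alg_hom f /\
            forall i, [/\ f (x i) = x' i, f (y i) = y' i,
                          f (h i) = h' i & f (hi i) = hi' i]) &
      (forall (B : algType k) (f g : A -> B), alg_hom f -> alg_hom g ->
          (forall i, [/\ f (x i) = g (x i), f (y i) = g (y i),
                         f (h i) = g (h i) & f (hi i) = g (hi i)]) ->
          forall a, f a = g a)].

Definition ipow (k : fieldType) (A : algType k) (h hi : A) (m : int) : A :=
  match m with
  | Posz p => h ^+ p
  | Negz p => hi ^+ p.+1
  end.

(* Main.v *)
Require Import Defs.
From HB Require Import structures.
From mathcomp Require Import all_boot all_order all_algebra.
From mathcomp Require Import boolp ring zify.
Import Order.TTheory GRing.Theory Num.Theory.
Local Open Scope ring_scope.

Section Gen.
Variables (k : fieldType) (A : algType k) (P : A -> Prop).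
Hypothesis P1 : P 1.
Hypothesis Plin : forall c u v, P u -> P v -> P (c *: u + v).
Hypothesis Pmul : forall u v, P u -> P v -> P (u * v).

Definition Pb : {pred A} := fun a => `[< P a >].

Lemma Pb_closed : GRing.subsemialg_closed Pb.
Proof.
have P0 : P 0.
  by have := Plin (-1) _ _ P1 P1; rewrite scaleN1r addNr.
split.
- by apply/asboolP.
- split; first by apply/asboolP.
  move=> u v /asboolP Pu /asboolP Pv; apply/asboolP.
  by have := Plin 1 _ _ Pu Pv; rewrite scale1r.
- move=> c u /asboolP Pu; apply/asboolP.
  by have := Plin c _ _ Pu P0; rewrite addr0.
- by move=> u v /asboolP Pu /asboolP Pv; apply/asboolP; apply: Pmul.
Qed.

HB.instance Definition _ := GRing.isSubalgClosed.Build k A Pb Pb_closed.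

Record SubA := MkSubA { sval : A; _ : sval \in Pb }.
HB.instance Definition _ := [isSub for sval].
HB.instance Definition _ := [Choice of SubA by <:].
HB.instance Definition _ := [SubChoice_isSubAlgebra of SubA by <:].

Lemma svalM (a b : SubA) : sval (a * b) = sval a * sval b. Proof. by []. Qed.
Lemma svalD (a b : SubA) : sval (a + b) = sval a + sval b. Proof. by []. Qed.
Lemma svalZ c (a : SubA) : sval (c *: a) = c *: sval a. Proof. by []. Qed.
Lemma sval1 : sval (1 : SubA) = 1. Proof. by []. Qed.
Lemma svalX (a : SubA) m : sval (a ^+ m) = sval a ^+ m.
Proof. by elim: m => [|m IH] //; rewrite !exprS svalM IH. Qed.
Lemma svalB (a b : SubA) : sval (a - b) = sval a - sval b. Proof. by []. Qed.

Lemma gen_all n d (q : 'I_n -> k) (x y h hi : 'I_n -> A) :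
  is_A d q x y h hi ->
  (forall i, [/\ P (x i), P (y i), P (h i) & P (hi i)]) -> forall w, P w.
Proof.
case=> rels ex un Pg w.
have mk : forall a, P a -> a \in Pb by move=> a Pa; apply/asboolP.
have Px i : P (x i) by case: (Pg i).
have Py i : P (y i) by case: (Pg i).
have Ph i : P (h i) by case: (Pg i).
have Phi i : P (hi i) by case: (Pg i).
pose xs i : SubA := MkSubA (x i) (mk _ (Px i)).
pose ys i : SubA := MkSubA (y i) (mk _ (Py i)).
pose hs i : SubA := MkSubA (h i) (mk _ (Ph i)).
pose his i : SubA := MkSubA (hi i) (mk _ (Phi i)).
have rels' : Arels d q xs ys hs his.
  case: rels => [inv [r1 r2 r3 r4 r5]]; split.
    by move=> i; split; apply: val_inj; rewrite /= ?sval1; case: (inv i).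
  split.
  - by move=> i; apply: val_inj; exact: r1.
  - by move=> i; apply: val_inj; exact: r2.
  - move=> i; apply: val_inj; rewrite /= r3.
    by rewrite /= svalX.
  - move=> i; apply: val_inj; rewrite /= r4.
    by rewrite /= svalX.
  - move=> i j ij a b Ha Hb; apply: val_inj => /=.
    apply: (r5 i j ij).
      by move: Ha; rewrite !inE => /or4P [] /eqP -> /=; rewrite eqxx ?orbT.
    by move: Hb; rewrite !inE => /or4P [] /eqP -> /=; rewrite eqxx ?orbT.
have [f [fh fg]] := ex SubA xs ys hs his rels'.
have fh' : alg_hom (fun a => sval (f a)).
  case: fh => f1 fD fM fZ; split.
  - by rewrite f1.
  - by move=> a b; rewrite fD.
  - by move=> a b; rewrite fM.
  - by move=> c a; rewrite fZ.
have idh : alg_hom (fun a : A => a) by [].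
have E : sval (f w) = w.
  apply: (un A _ _ fh' idh) => i.
  by case: (fg i) => -> -> -> ->.
rewrite -E; by case: (f w) => /= a /asboolP.
Qed.
End Gen.

Set Implicit Arguments. Unset Strict Implicit.

Section OpDef.
Variables (k : fieldType) (W : zmodType).

Record Op := MkOp {
  opf : (W -> k) -> (W -> k);
  opA : forall F G w, opf (fun z => F z + G z) w = opf F w + opf G w;
  opZ : forall c F w, opf (fun z => c * F z) w = c * opf F w }.

Lemma op_ext (O1 O2 : Op) : (forall F w, opf O1 F w = opf O2 F w) -> O1 = O2.
Proof.
case: O1 O2 => f1 A1 Z1 [f2 A2 Z2] /= E.
have ef : f1 = f2 by apply: funext => F; apply: funext => w; apply: E.
subst f2; congr MkOp; apply: Prop_irrelevance.
Qed.

HB.instance Definition _ := gen_eqMixin Op.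
HB.instance Definition _ := gen_choiceMixin Op.

Program Definition op_zero : Op := @MkOp (fun F w => 0) _ _.
Next Obligation. by rewrite addr0. Qed.
Next Obligation. by rewrite mulr0. Qed.
Program Definition op_add (O1 O2 : Op) : Op :=
  @MkOp (fun F w => opf O1 F w + opf O2 F w) _ _.
Next Obligation. by rewrite !opA addrACA. Qed.
Next Obligation. by rewrite !opZ mulrDr. Qed.
Program Definition op_opp (O : Op) : Op := @MkOp (fun F w => - opf O F w) _ _.
Next Obligation. by rewrite opA opprD. Qed.
Next Obligation. by rewrite opZ mulrN. Qed.
Program Definition op_one : Op := @MkOp (fun F w => F w) _ _.
Program Definition op_mul (O1 O2 : Op) : Op :=
  @MkOp (fun F w => opf O1 (opf O2 F) w) _ _.
Next Obligation.
have -> : opf O2 (fun z => F z + G z) = (fun z => opf O2 F z + opf O2 G z).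
  by apply: funext => z; rewrite opA.
by rewrite opA.
Qed.
Next Obligation.
have -> : opf O2 (fun z => c * F z) = (fun z => c * opf O2 F z).
  by apply: funext => z; rewrite opZ.
by rewrite opZ.
Qed.
Program Definition op_scale (c : k) (O : Op) : Op :=
  @MkOp (fun F w => c * opf O F w) _ _.
Next Obligation. by rewrite opA mulrDr. Qed.
Next Obligation. by rewrite opZ mulrCA. Qed.

Lemma op_addA : associative op_add.
Proof. by move=> a b c; apply: op_ext => F w /=; rewrite addrA. Qed.
Lemma op_addC : commutative op_add.
Proof. by move=> a b; apply: op_ext => F w /=; rewrite addrC. Qed.
Lemma op_add0 : left_id op_zero op_add.
Proof. by move=> a; apply: op_ext => F w /=; rewrite add0r. Qed.
Lemma op_addN : left_inverse op_zero op_opp op_add.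
Proof. by move=> a; apply: op_ext => F w /=; rewrite addNr. Qed.
HB.instance Definition _ := GRing.isZmodule.Build Op op_addA op_addC op_add0 op_addN.

Lemma op_mulA : associative op_mul.
Proof. by move=> a b c; apply: op_ext. Qed.
Lemma op_mul1 : left_id op_one op_mul.
Proof. by move=> a; apply: op_ext. Qed.
Lemma op_mulr1 : right_id op_one op_mul.
Proof. by move=> a; apply: op_ext => F w /=; congr opf; apply: funext. Qed.
Lemma op_mulDl : left_distributive op_mul +%R.
Proof. by move=> a b c; apply: op_ext. Qed.
Lemma op_mulDr : right_distributive op_mul +%R.
Proof. by move=> a b c; apply: op_ext => F w /=; rewrite opA. Qed.
Lemma op_one_neq0 : op_one != 0.
Proof.
apply/eqP => E; have := congr1 (fun O : Op => opf O (fun _ => 1) 0) E.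
by move=> /= /eqP; rewrite oner_eq0.
Qed.
HB.instance Definition _ := GRing.Zmodule_isNzRing.Build Op
  op_mulA op_mul1 op_mulr1 op_mulDl op_mulDr op_one_neq0.

Lemma op_scaleA a b v : op_scale a (op_scale b v) = op_scale (a * b) v.
Proof. by apply: op_ext => F w /=; rewrite mulrA. Qed.
Lemma op_scale1 : left_id 1 op_scale.
Proof. by move=> a; apply: op_ext => F w /=; rewrite mul1r. Qed.
Lemma op_scaleDr : right_distributive op_scale +%R.
Proof. by move=> a b c; apply: op_ext => F w /=; rewrite mulrDr. Qed.
Lemma op_scaleDl v : {morph op_scale^~ v: a b / a + b}.
Proof. by move=> a b; apply: op_ext => F w /=; rewrite mulrDl. Qed.
HB.instance Definition _ := GRing.Zmodule_isLmodule.Build k Op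
  op_scaleA op_scale1 op_scaleDr op_scaleDl.
Lemma op_scaleAl (a : k) (u v : Op) : a *: (u * v) = (a *: u) * v.
Proof. by apply: op_ext. Qed.
HB.instance Definition _ := GRing.Lmodule_isLalgebra.Build k Op op_scaleAl.
Lemma op_scaleAr (a : k) (u v : Op) : a *: (u * v) = u * (a *: v).
Proof.
apply: op_ext => F w /=.
by rewrite -(opZ u a (opf v F)).
Qed.
HB.instance Definition _ := GRing.Lalgebra_isAlgebra.Build k Op op_scaleAr.

Lemma opfD (O1 O2 : Op) F w : opf (O1 + O2) F w = opf O1 F w + opf O2 F w.
Proof. by []. Qed.
Lemma opfZ c (O : Op) F w : opf (c *: O) F w = c * opf O F w.
Proof. by []. Qed.
Lemma opfM (O1 O2 : Op) F w : opf (O1 * O2) F w = opf O1 (opf O2 F) w.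
Proof. by []. Qed.
Lemma opf1 F w : opf (1 : Op) F w = F w.
Proof. by []. Qed.
Lemma opf0 F w : opf (0 : Op) F w = 0.
Proof. by []. Qed.
Lemma opfN (O : Op) F w : opf (- O) F w = - opf O F w.
Proof. by []. Qed.
End OpDef.

Section Tw.
Variables (k : fieldType) (n : nat) (q : 'I_n -> k).
Hypothesis hq0 : forall i, q i != 0.
Local Notation FF := {ffun 'I_n -> int}.
Definition W := (FF * FF)%type.
Local Notation OpW := (Op k W).

Definition th (s w : W) : k := \prod_(i < n) q i ^ (s.1 i * w.2 i).
Definition cc (s t : W) : k := \prod_(i < n) q i ^ (- (t.1 i * s.2 i)).

Lemma th_neq0 s w : th s w != 0.
Proof. by rewrite /th; apply/prodf_neq0 => i _; apply: expfz_neq0. Qed.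
Lemma cc_neq0 s t : cc s t != 0.
Proof. by rewrite /cc; apply/prodf_neq0 => i _; apply: expfz_neq0. Qed.

Program Definition L (s : W) : OpW := @MkOp _ _ (fun F w => th s w * F (w - s)) _ _.
Next Obligation. by rewrite mulrDr. Qed.
Next Obligation. by rewrite mulrCA. Qed.

Lemma opfL s F w : opf (L s) F w = th s w * F (w - s).
Proof. by []. Qed.

Lemma thDl s t w : th (s + t) w = th s w * th t w.
Proof.
rewrite /th -big_split /=; apply: eq_bigr => i _.
by rewrite ffunE mulrDl expfzDr.
Qed.

Lemma thBr t w s : th t (w - s) = th t w * cc s t.
Proof.
rewrite /th /cc -big_split /=; apply: eq_bigr => i _.
by rewrite !ffunE mulrDr mulrN expfzDr.
Qed.

Lemma LM s t : L s * L t = cc s t *: L (s + t).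
Proof.
apply: op_ext => F w; rewrite opfM opfZ !opfL thBr thDl.
rewrite opprD addrA. ring.
Qed.

Lemma L0 : L 0 = 1.
Proof.
apply: op_ext => F w; rewrite opfL opf1 subr0 /th big1 ?mul1r // => i _.
by rewrite ffunE mul0r expr0z.
Qed.

Lemma th0 w : th 0 w = 1.
Proof. by rewrite /th big1 // => i _; rewrite ffunE mul0r expr0z. Qed.

Lemma cc0l t : cc 0 t = 1.
Proof. by rewrite /cc big1 // => i _; rewrite ffunE mulr0 oppr0 expr0z. Qed.
Lemma cc0r t : cc t 0 = 1.
Proof. by rewrite /cc big1 // => i _; rewrite ffunE mul0r oppr0 expr0z. Qed.

Definition delta0 (w : W) : k := (w == 0)%:R.
Definition coef (O : OpW) (w : W) : k := opf O delta0 w / th w w.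

Lemma coefL s w : coef (L s) w = (w == s)%:R.
Proof.
rewrite /coef opfL /delta0 subr_eq0; case: eqP => [->|_].
  by rewrite mulr1 divff // th_neq0.
by rewrite mulr0 mul0r.
Qed.
Lemma coefD O1 O2 w : coef (O1 + O2) w = coef O1 w + coef O2 w.
Proof. by rewrite /coef opfD mulrDl. Qed.
Lemma coefZ c O w : coef (c *: O) w = c * coef O w.
Proof. by rewrite /coef opfZ mulrA. Qed.
Lemma coef0 w : coef 0 w = 0.
Proof. by rewrite /coef opf0 mul0r. Qed.
Lemma coef1 w : coef 1 w = (w == 0)%:R.
Proof. by rewrite -L0 coefL. Qed.
Lemma coef_sum (I : Type) (r : seq I) (G : I -> OpW) w :
  coef (\sum_(i <- r) G i) w = \sum_(i <- r) coef (G i) w.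
Proof.
elim: r => [|a r IH]; first by rewrite !big_nil coef0.
by rewrite !big_cons coefD IH.
Qed.

Definition Fin (O : OpW) := exists l : seq (k * W), O = \sum_(p <- l) p.1 *: L p.2.
Definition FinU (O : OpW) (U : seq W) := uniq U /\ O = \sum_(s <- U) coef O s *: L s.

Definition cf (l : seq (k * W)) (s : W) : k := \sum_(p <- l | p.2 == s) p.1.

Lemma regroup (M : lmodType k) (G : W -> M) (l : seq (k * W)) :
  \sum_(p <- l) p.1 *: G p.2 = \sum_(s <- undup (map snd l)) cf l s *: G s.
Proof.
elim: l => [|p l IH]; first by rewrite !big_nil.
rewrite big_cons IH /= /cf.
have cfc s : \sum_(p0 <- p :: l | p0.2 == s) p0.1 =
    (if p.2 == s then p.1 else 0) + \sum_(p0 <- l | p0.2 == s) p0.1.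
  by rewrite big_cons; case: ifP; rewrite ?add0r.
case: ifP => Hin.
  under [in RHS]eq_bigr do rewrite cfc scalerDl.
  rewrite big_split /=; congr (_ + _).
  rewrite (bigD1_seq p.2) ?mem_undup ?undup_uniq //= eqxx big1 ?addr0 //.
  by move=> s; rewrite eq_sym => /negbTE ->; rewrite scale0r.
rewrite big_cons cfc eqxx.
have -> : \sum_(p0 <- l | p0.2 == p.2) p0.1 = 0.
  rewrite big1_seq // => p0 /andP [/eqP E H]; exfalso.
  by move/negbT: Hin => /negP; apply; rewrite -E; apply: map_f.
rewrite addr0; congr (_ + _).
apply: eq_big_seq => s; rewrite mem_undup => Hs; rewrite cfc.
case: eqP => [E|_]; last by rewrite add0r.
by move: Hin; rewrite E Hs.
Qed.

Lemma coef_Fin (l : seq (k * W)) w :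
  coef (\sum_(p <- l) p.1 *: L p.2) w = cf l w.
Proof.
rewrite coef_sum /cf [RHS]big_mkcond /=; apply: eq_bigr => p _.
by rewrite coefZ coefL eq_sym; case: eqP; rewrite ?mulr1 ?mulr0.
Qed.

Lemma cf_notin l w : w \notin map snd l -> cf l w = 0.
Proof.
move=> Hw; rewrite /cf big1_seq // => p /andP [/eqP E H].
by move: Hw; rewrite -E map_f.
Qed.

Lemma Fin_FinU O : Fin O -> exists U, FinU O U /\ forall w, coef O w != 0 -> w \in U.
Proof.
case=> l E; exists (undup (map snd l)); split; first split.
- exact: undup_uniq.
- rewrite {1}E regroup; apply: eq_bigr => s _; by rewrite E coef_Fin.
- move=> w; rewrite E coef_Fin mem_undup => H; apply/negPn/negP => Hn.
  by move: H; rewrite cf_notin ?eqxx.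
Qed.

Lemma Fin_of_FinU O U : FinU O U -> Fin O.
Proof.
case=> _ E; exists [seq (coef O s, s) | s <- U]; by rewrite big_map.
Qed.

Lemma FinL s : Fin (L s).
Proof. by exists [:: (1, s)]; rewrite big_seq1 scale1r. Qed.
Lemma Fin1 : Fin 1.
Proof. by rewrite -L0; apply: FinL. Qed.
Lemma FinD O1 O2 : Fin O1 -> Fin O2 -> Fin (O1 + O2).
Proof. by case=> l1 -> [l2 ->]; exists (l1 ++ l2); rewrite big_cat. Qed.
Lemma FinZ c O : Fin O -> Fin (c *: O).
Proof.
case=> l ->; exists [seq (c * p.1, p.2) | p <- l].
rewrite big_map scaler_sumr; apply: eq_bigr => p _; by rewrite scalerA.
Qed.
Lemma FinN O : Fin O -> Fin (- O).
Proof. by move=> H; rewrite -scaleN1r; apply: FinZ. Qed.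
Lemma FinM O1 O2 : Fin O1 -> Fin O2 -> Fin (O1 * O2).
Proof.
case=> l1 -> [l2 ->].
exists [seq (p.1 * r.1 * cc p.2 r.2, p.2 + r.2) | p <- l1, r <- l2].
rewrite big_allpairs_dep mulr_suml; apply: eq_bigr => p _.
rewrite mulr_sumr; apply: eq_bigr => r _ /=.
by rewrite -scalerAl -scalerAr LM !scalerA; congr (_ *: _); ring.
Qed.

Lemma coefM O1 O2 U1 U2 w : FinU O1 U1 -> FinU O2 U2 ->
  coef (O1 * O2) w = \sum_(s <- U1) \sum_(t <- U2)
     coef O1 s * coef O2 t * cc s t * (w == s + t)%:R.
Proof.
case=> _ E1 [_ E2]; rewrite {1}E1 {1}E2 mulr_suml coef_sum.
apply: eq_bigr => s _; rewrite mulr_sumr coef_sum; apply: eq_bigr => t _.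
by rewrite -scalerAl -scalerAr LM !scalerA coefZ coefL mulrA.
Qed.

Lemma coefM_single O1 O2 U1 U2 s0 t0 : FinU O1 U1 -> FinU O2 U2 ->
  s0 \in U1 -> t0 \in U2 ->
  (forall s t, s \in U1 -> t \in U2 -> coef O1 s != 0 -> coef O2 t != 0 ->
      s + t = s0 + t0 -> s = s0 /\ t = t0) ->
  coef (O1 * O2) (s0 + t0) = coef O1 s0 * coef O2 t0 * cc s0 t0.
Proof.
move=> F1 F2 H1 H2 Hu; rewrite (coefM (s0 + t0) F1 F2).
have [u1 _] := F1; have [u2 _] := F2.
rewrite (bigD1_seq s0) //= (bigD1_seq t0) //= eqxx mulr1.
have Z : forall s t, s \in U1 -> t \in U2 -> (s != s0) || (t != t0) ->
    coef O1 s * coef O2 t * cc s t * (s0 + t0 == s + t)%:R = 0.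
  move=> s t Hs Ht Hne.
  case: (eqVneq (coef O1 s) 0) => [->|n1]; first by rewrite !mul0r.
  case: (eqVneq (coef O2 t) 0) => [->|n2]; first by rewrite mulr0 !mul0r.
  case: eqP => [E|_]; last by rewrite mulr0.
  by have [e1 e2] := Hu s t Hs Ht n1 n2 (esym E); move: Hne; rewrite e1 e2 !eqxx.
rewrite big1_seq ?addr0; last first.
  by move=> t /andP [Ht HU]; apply: Z; rewrite ?Ht ?orbT.
rewrite big1_seq ?addr0 // => s /andP [Hs HU].
by rewrite big1_seq // => t /andP [_ Ht]; apply: Z; rewrite ?Hs.
Qed.

Lemma coefM_supp O1 O2 U1 U2 w : FinU O1 U1 -> FinU O2 U2 ->
  coef (O1 * O2) w != 0 -> exists s t, [/\ s \in U1, t \in U2,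
     coef O1 s != 0, coef O2 t != 0 & w = s + t].
Proof.
move=> F1 F2; rewrite (coefM w F1 F2) => H.
case: (pselect (exists s t, [/\ s \in U1, t \in U2,
     coef O1 s != 0, coef O2 t != 0 & w = s + t])) => // Hn.
exfalso; move/eqP: H; apply.
rewrite big1_seq // => s /andP [_ Hs]; rewrite big1_seq // => t /andP [_ Ht].
case: (eqVneq (coef O1 s) 0) => [->|n1]; first by rewrite !mul0r.
case: (eqVneq (coef O2 t) 0) => [->|n2]; first by rewrite mulr0 !mul0r.
case: eqP => [E|_]; last by rewrite mulr0.
by exfalso; apply: Hn; exists s, t.
Qed.

Definition ltF (s t : FF) : Prop :=
  exists j : 'I_n, (forall i : 'I_n, (i < j)%N -> s i = t i) /\ s j < t j.

Lemma ltF_irr s : ~ ltF s s.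
Proof. by case=> j [_]; rewrite ltxx. Qed.

Lemma ltF_trans s t u : ltF s t -> ltF t u -> ltF s u.
Proof.
case=> j1 [e1 l1] [j2 [e2 l2]].
case: (ltngtP j1 j2) => [c|c|c].
- exists j1; split; last by rewrite -(e2 _ c).
  by move=> i hi; rewrite e1 // e2 //; apply: ltn_trans c.
- exists j2; split; last by rewrite (e1 _ c).
  by move=> i hi; rewrite e1 ?e2 //; apply: ltn_trans c.
- have cj : j1 = j2 by apply: val_inj.
  subst j2; exists j1; split; last by apply: lt_trans l2.
  by move=> i hi; rewrite e1 ?e2.
Qed.

Lemma ltF_total s t : s = t \/ ltF s t \/ ltF t s.
Proof.
case: (boolP [exists i, s i != t i]) => [/existsP [i0 Hi0]|Hn]; last first.
  left; apply/ffunP => i; apply/eqP; apply: contraNT Hn => H.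
  by apply/existsP; exists i.
case: (@arg_minnP _ i0 (fun i => s i != t i) (fun i : 'I_n => nat_of_ord i) Hi0).
move=> j Hj Hmin; right.
have E : forall i : 'I_n, (i < j)%N -> s i = t i.
  move=> i hi; apply/eqP; apply: contraTT hi => H; rewrite -leqNgt.
  exact: Hmin.
case: (ltgtP (s j) (t j)) => [c|c|c].
- by left; exists j.
- by right; exists j; split => // i hi; rewrite E.
- by move: Hj; rewrite c eqxx.
Qed.

Lemma ltF_add s t u : ltF s t -> ltF (s + u) (t + u).
Proof.
case=> j [e l]; exists j; split.
  by move=> i hi; rewrite !ffunE e.
by rewrite !ffunE ltrD2r.
Qed.

Definition ltW (s t : W) : Prop := ltF s.1 t.1 \/ (s.1 = t.1 /\ ltF s.2 t.2).

Lemma ltW_irr s : ~ ltW s s.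
Proof. by case=> [/ltF_irr|[_ /ltF_irr]]. Qed.

Lemma ltW_trans s t u : ltW s t -> ltW t u -> ltW s u.
Proof.
case=> [a|[a b]] [c|[c d]].
- by left; apply: ltF_trans c.
- by left; rewrite -c.
- by left; rewrite a.
- by right; split; [rewrite a|apply: ltF_trans d].
Qed.

Lemma ltW_total s t : s = t \/ ltW s t \/ ltW t s.
Proof.
case: (ltF_total s.1 t.1) => [e1|[c|c]]; last 2 first.
- by right; left; left.
- by right; right; left.
case: (ltF_total s.2 t.2) => [e2|[c|c]].
- by left; case: s t e1 e2 => [a b] [c d] /= -> ->.
- by right; left; right.
- by right; right; right.
Qed.

Lemma ltW_add s t u : ltW s t -> ltW (s + u) (t + u).
Proof.
case=> [a|[a b]]; first by left; apply: ltF_add.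
by right; split; [rewrite /= a | apply: ltF_add].
Qed.

Section Rel.
Variables (T : eqType) (R : T -> T -> Prop).
Hypothesis Rtr : forall a b c, R a b -> R b c -> R a c.
Hypothesis Rtot : forall a b, a = b \/ R a b \/ R b a.

Lemma ex_minR (S : seq T) : S != [::] ->
  exists m, m \in S /\ forall s, s \in S -> s = m \/ R m s.
Proof.
elim: S => [//|a S IH] _.
case: (eqVneq S [::]) => [->|SN].
  by exists a; split; [rewrite mem_seq1 | move=> s; rewrite mem_seq1 => /eqP ->; left].
have [m [Hm Hs]] := IH SN.
case: (Rtot a m) => [E|[c|c]].
- exists m; split; first by rewrite inE Hm orbT.
  by move=> s; rewrite inE => /orP [/eqP ->|/Hs //]; left.
- exists a; split; first by rewrite inE eqxx.
  move=> s; rewrite inE => /orP [/eqP ->|/Hs [->|d]]; first by left.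
    by right.
  by right; apply: Rtr d.
- exists m; split; first by rewrite inE Hm orbT.
  by move=> s; rewrite inE => /orP [/eqP ->|/Hs //]; right.
Qed.
End Rel.

Section RelZ.
Variables (T : zmodType) (R : T -> T -> Prop).
Hypothesis Rtr : forall a b c, R a b -> R b c -> R a c.
Hypothesis Rirr : forall a, ~ R a a.
Hypothesis Radd : forall a b c, R a b -> R (a + c) (b + c).

Lemma sum_strict a0 b0 a b : (a = a0 \/ R a0 a) -> (b = b0 \/ R b0 b) ->
  a + b = a0 + b0 -> a = a0 /\ b = b0.
Proof.
have Raddl x y z : R x y -> R (z + x) (z + y).
  by move=> r; rewrite ![z + _]addrC; apply: Radd.
case=> [->|ra]; case=> [->|rb] E //.
- by exfalso; have := @Rirr (a0 + b0); apply; rewrite -{2}E; apply: Raddl.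
- by exfalso; have := @Rirr (a0 + b0); apply; rewrite -{2}E; apply: Radd.
- exfalso; have := @Rirr (a0 + b0); apply; rewrite -{2}E; apply: (@Rtr _ (a + b0)).
    by apply: Radd.
  by apply: Raddl.
Qed.
End RelZ.

Lemma ltWr_tr a b c : ltW b a -> ltW c b -> ltW c a.
Proof. by move=> x y; apply: ltW_trans y x. Qed.
Lemma ltWr_tot a b : a = b \/ ltW b a \/ ltW a b.
Proof. by case: (ltW_total a b) => [|[]]; auto. Qed.
Lemma ltWr_add a b c : ltW b a -> ltW (b + c) (a + c).
Proof. exact: ltW_add. Qed.

Lemma Fin_neq0 O U : FinU O U -> O != 0 -> [seq s <- U | coef O s != 0] != [::].
Proof.
case=> _ E N; apply/eqP => H; move/eqP: N; apply.
rewrite E big1_seq // => s /andP [_ Hs].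
case: (eqVneq (coef O s) 0) => [->|nz]; first by rewrite scale0r.
have : s \in [seq s <- U | coef O s != 0] by rewrite mem_filter nz.
by rewrite H.
Qed.

Lemma unit_mono O1 O2 : Fin O1 -> Fin O2 -> O1 * O2 = 1 ->
  exists s0 t0, [/\ s0 + t0 = 0, coef O1 s0 != 0,
     (forall w, coef O1 w != 0 -> w = s0) & (forall w, coef O2 w != 0 -> w = t0)].
Proof.
move=> /Fin_FinU [U1 [F1 S1]] /Fin_FinU [U2 [F2 S2]] E.
have N1 : O1 != 0 by apply: contra_eq_neq E => ->; rewrite mul0r eq_sym oner_neq0.
have N2 : O2 != 0 by apply: contra_eq_neq E => ->; rewrite mulr0 eq_sym oner_neq0.
set L1 := [seq s <- U1 | coef O1 s != 0].
set L2 := [seq s <- U2 | coef O2 s != 0].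
have M1 w : (w \in L1) = (coef O1 w != 0).
  rewrite mem_filter; case: (boolP (coef O1 w != 0)) => //= H; exact: S1.
have M2 w : (w \in L2) = (coef O2 w != 0).
  rewrite mem_filter; case: (boolP (coef O2 w != 0)) => //= H; exact: S2.
have key : forall R : W -> W -> Prop,
    (forall a b c, R a b -> R b c -> R a c) -> (forall a, ~ R a a) ->
    (forall a b c, R a b -> R (a + c) (b + c)) ->
    forall s0 t0, s0 \in L1 -> t0 \in L2 ->
    (forall s, s \in L1 -> s = s0 \/ R s0 s) ->
    (forall t, t \in L2 -> t = t0 \/ R t0 t) -> s0 + t0 = 0.
  move=> R Rtr Rirr Radd s0 t0 H0 H0' Hs Ht.
  have C : coef (O1 * O2) (s0 + t0) = coef O1 s0 * coef O2 t0 * cc s0 t0.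
    apply: (coefM_single F1 F2).
    - by apply: S1; rewrite -M1.
    - by apply: S2; rewrite -M2.
    - move=> s t _ _ a b; apply: (sum_strict Rtr Rirr Radd (Hs s _) (Ht t _)).
        by rewrite M1.
      by rewrite M2.
  have : coef (O1 * O2) (s0 + t0) != 0.
    rewrite C; apply: mulf_neq0; [apply: mulf_neq0; [rewrite -M1 //|rewrite -M2 //]|apply: cc_neq0].
  by rewrite E coef1; case: (s0 + t0 =P 0) => // _; rewrite eqxx.
have [s0 [Hs0 Ms0]] := ex_minR ltW_trans ltW_total (Fin_neq0 F1 N1).
have [t0 [Ht0 Mt0]] := ex_minR ltW_trans ltW_total (Fin_neq0 F2 N2).
have [s1 [Hs1 Ms1]] := ex_minR ltWr_tr ltWr_tot (Fin_neq0 F1 N1).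
have [t1 [Ht1 Mt1]] := ex_minR ltWr_tr ltWr_tot (Fin_neq0 F2 N2).
have e0 := key _ ltW_trans ltW_irr ltW_add s0 t0 Hs0 Ht0 Ms0 Mt0.
have e1 := key _ ltWr_tr ltW_irr ltWr_add s1 t1 Hs1 Ht1 Ms1 Mt1.
have [E1 E2] : s1 = s0 /\ t1 = t0.
  apply: (sum_strict ltW_trans ltW_irr ltW_add (Ms0 _ Hs1) (Mt0 _ Ht1)).
  by rewrite e0 e1.
exists s0, t0; split => //.
- by rewrite -M1.
- move=> w; rewrite -M1 => Hw.
  case: (Ms0 _ Hw) => // c; case: (Ms1 _ Hw) => [->//|d].
  by exfalso; apply: (@ltW_irr s0); apply: ltW_trans c _; rewrite -E1.
- move=> w; rewrite -M2 => Hw.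
  case: (Mt0 _ Hw) => // c; case: (Mt1 _ Hw) => [->//|d].
  by exfalso; apply: (@ltW_irr t0); apply: ltW_trans c _; rewrite -E2.
Qed.

Definition Box (O : OpW) (a m M : FF) :=
  [/\ Fin O, (forall w, coef O w != 0 -> w.1 = a /\ forall i, m i <= w.2 i <= M i),
      coef O (a, m) != 0 & coef O (a, M) != 0].

Lemma bounds_eq (s t m1 m2 : FF) :
  (forall i, m1 i <= s i) -> (forall i, m2 i <= t i) -> s + t = m1 + m2 ->
  s = m1 /\ t = m2.
Proof.
move=> H1 H2 E.
have e i : s i = m1 i.
  have := H1 i; have := H2 i; have := congr1 (fun f : FF => f i) E.
  rewrite /= !ffunE; move: (s i) (t i) (m1 i) (m2 i) => a b c d; lia.
split; apply/ffunP => i; first by rewrite e.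
have := congr1 (fun f : FF => f i) E; rewrite /= !ffunE e; exact: addrI.
Qed.

Lemma bounds_eq' (s t m1 m2 : FF) :
  (forall i, s i <= m1 i) -> (forall i, t i <= m2 i) -> s + t = m1 + m2 ->
  s = m1 /\ t = m2.
Proof.
move=> H1 H2 E.
have e i : s i = m1 i.
  have := H1 i; have := H2 i; have := congr1 (fun f : FF => f i) E.
  rewrite /= !ffunE; move: (s i) (t i) (m1 i) (m2 i) => a b c d; lia.
split; apply/ffunP => i; first by rewrite e.
have := congr1 (fun f : FF => f i) E; rewrite /= !ffunE e; exact: addrI.
Qed.

Lemma Box_mul O1 O2 a1 m1 M1 a2 m2 M2 : Box O1 a1 m1 M1 -> Box O2 a2 m2 M2 ->
  Box (O1 * O2) (a1 + a2) (m1 + m2) (M1 + M2).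
Proof.
move=> [B1 S1 c1 C1] [B2 S2 c2 C2].
have [U1 [F1 T1]] := Fin_FinU B1; have [U2 [F2 T2]] := Fin_FinU B2.
split.
- exact: FinM.
- move=> w /(coefM_supp F1 F2) [s [t [_ _ n1 n2 ->]]].
  have [e1 b1] := S1 _ n1; have [e2 b2] := S2 _ n2.
  split; first by rewrite /= e1 e2.
  move=> i; rewrite /= !ffunE.
  by have /andP [u1 v1] := b1 i; have /andP [u2 v2] := b2 i; rewrite !lerD.
- have -> : (a1 + a2, m1 + m2) = (a1, m1) + (a2, m2) by [].
  rewrite (coefM_single F1 F2 (T1 _ c1) (T2 _ c2)).
    by apply: mulf_neq0; [apply: mulf_neq0|apply: cc_neq0].
  move=> s t _ _ n1 n2 E.
  have [e1 b1] := S1 _ n1; have [e2 b2] := S2 _ n2.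
  have E2 : s.2 + t.2 = m1 + m2 by have := congr1 snd E.
  have [f1 f2] := bounds_eq (fun i => proj1 (andP (b1 i))) (fun i => proj1 (andP (b2 i))) E2.
  by split; [case: s e1 f1 {E E2 n1 b1} => ? ? /= -> -> | case: t e2 f2 {E E2 n2 b2} => ? ? /= -> ->].
- have -> : (a1 + a2, M1 + M2) = (a1, M1) + (a2, M2) by [].
  rewrite (coefM_single F1 F2 (T1 _ C1) (T2 _ C2)).
    by apply: mulf_neq0; [apply: mulf_neq0|apply: cc_neq0].
  move=> s t _ _ n1 n2 E.
  have [e1 b1] := S1 _ n1; have [e2 b2] := S2 _ n2.
  have E2 : s.2 + t.2 = M1 + M2 by have := congr1 snd E.
  have [f1 f2] := bounds_eq' (fun i => proj2 (andP (b1 i))) (fun i => proj2 (andP (b2 i))) E2.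
  by split; [case: s e1 f1 {E E2 n1 b1} => ? ? /= -> -> | case: t e2 f2 {E E2 n2 b2} => ? ? /= -> ->].
Qed.

Lemma coefZL c s w : coef (c *: L s) w = if w == s then c else 0.
Proof. by rewrite coefZ coefL; case: eqP => _; rewrite ?mulr1 ?mulr0. Qed.

Lemma Box_L c s : c != 0 -> Box (c *: L s) s.1 s.2 s.2.
Proof.
move=> nc; split.
- by apply: FinZ; apply: FinL.
- move=> w; rewrite coefZL; case: (w =P s) => [->|_]; last by rewrite eqxx.
  by move=> _; split => // i; rewrite lexx.
- by rewrite coefZL -surjective_pairing eqxx.
- by rewrite coefZL -surjective_pairing eqxx.
Qed.

Lemma Box_1 : Box 1 0 0 0.
Proof. by have := Box_L 0 (oner_neq0 k); rewrite scale1r L0. Qed.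

Definition ev (i : 'I_n) (z : int) : FF := [ffun l => if l == i then z else 0].
Lemma evD i a b : ev i (a + b) = ev i a + ev i b.
Proof. by apply/ffunP => l; rewrite !ffunE; case: eqP; rewrite ?addr0. Qed.
Lemma ev0 i : ev i 0 = 0.
Proof. by apply/ffunP => l; rewrite !ffunE; case: eqP. Qed.

Lemma cc_t0 s t : t.1 = 0 -> cc s t = 1.
Proof. by move=> E; rewrite /cc big1 // => i _; rewrite E ffunE mul0r oppr0 expr0z. Qed.
Lemma cc_s0 s t : s.2 = 0 -> cc s t = 1.
Proof. by move=> E; rewrite /cc big1 // => i _; rewrite E ffunE mulr0 oppr0 expr0z. Qed.
Lemma ccH s b : cc s (0, b) = 1.
Proof. exact: cc_t0. Qed.
Lemma ccX a t : cc (a, 0) t = 1.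
Proof. exact: cc_s0. Qed.
Lemma cc_ev i a b s1 t2 : cc (s1, ev i b) (ev i a, t2) = q i ^ (-(a * b)).
Proof.
rewrite /cc (bigD1 i) //= !ffunE eqxx big1 ?mulr1 // => l /negbTE nl.
by rewrite !ffunE nl mul0r oppr0 expr0z.
Qed.
Lemma cc_ev_ne i j a b s1 t2 : i != j -> cc (s1, ev i b) (ev j a, t2) = 1.
Proof.
move=> nij; rewrite /cc big1 // => l _; rewrite !ffunE.
case: (l =P i) => [->|_]; last by rewrite mulr0 oppr0 expr0z.
by rewrite (negbTE nij) mul0r oppr0 expr0z.
Qed.

Lemma Lcomm i j a1 b1 a2 b2 : i != j ->
  L (ev i a1, ev i b1) * L (ev j a2, ev j b2) = L (ev j a2, ev j b2) * L (ev i a1, ev i b1).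
Proof.
move=> nij; rewrite !LM cc_ev_ne // cc_ev_ne; last by rewrite eq_sym.
by rewrite addrC.
Qed.

Definition Lin (i : 'I_n) (O : OpW) := exists c1 a1 b1 c2 a2 b2,
  O = c1 *: L (ev i a1, ev i b1) + c2 *: L (ev i a2, ev i b2).

Lemma Lin_comm i j O1 O2 : i != j -> Lin i O1 -> Lin j O2 -> O1 * O2 = O2 * O1.
Proof.
move=> nij [c1 [a1 [b1 [c2 [a2 [b2 ->]]]]]] [d1 [e1 [f1 [d2 [e2 [f2 ->]]]]]].
rewrite !mulrDl !mulrDr -!scalerAl -!scalerAr !scalerA !(Lcomm _ _ _ _ nij).
by rewrite addrACA; congr (_ + _ + (_ + _)); rewrite mulrC.
Qed.

Lemma pairD (a b c e : FF) : ((a, b) : W) + (c, e) = (a + c, b + e).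
Proof. by []. Qed.
Lemma pair0 : ((0, 0) : W) = 0.
Proof. by []. Qed.

Definition Xo i := L (ev i 1, 0).
Definition Ho i := L (0, ev i 1).
Definition HIo i := L (0, ev i (-1)).
Definition Yo (d : nat) i := q i ^+ d *: L (ev i (-1), ev i d%:Z) - L (ev i (-1), 0).

Lemma Hpow i m : Ho i ^+ m = L (0, ev i m%:Z).
Proof.
elim: m => [|m IH]; first by rewrite expr0 ev0 pair0 L0.
by rewrite exprS IH /Ho LM ccH scale1r pairD addr0 -evD intS.
Qed.

Lemma model_rels d : Arels d q Xo (Yo d) Ho HIo.
Proof.
have qi i : q i ^ (-1) = (q i)^-1 by rewrite -exprnN expr1.
split.
  move=> i; rewrite /Ho /HIo !LM !ccH !scale1r !pairD !addr0 -!evD.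
  by rewrite addrN addNr ev0 pair0 L0.
split.
- move=> i; rewrite /Xo /Ho -scalerAl !LM ccH scale1r !pairD addr0 add0r.
  rewrite cc_ev mulr1 qi scalerA divff ?scale1r //.
- move=> i; rewrite /Yo /Ho -scalerAl mulrBl mulrBr -scalerAl -scalerAr !LM.
  rewrite !ccH !scale1r !pairD !addr0.
  rewrite -(ev0 i) !cc_ev ev0 mulN1r opprK expr1z.
  have e1 : (q i)^-1 * q i ^+ d * q i = q i ^+ d.
    by rewrite mulrC mulrA divff ?mul1r.
  have e2 : (q i)^-1 * q i = 1 by rewrite mulVf.
  by rewrite scalerBr !scalerA e1 e2 scale1r !add0r [ev i 1 + _]addrC.
- move=> i; rewrite /Xo /Yo mulrBr -scalerAr !LM !ccX !scale1r !pairD !addr0.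
  rewrite -!evD addrN ev0 add0r pair0 L0 exprZn Hpow //.
- move=> i; rewrite /Xo /Yo mulrBl -scalerAl !LM !pairD ?addr0 ?add0r.
  rewrite -!evD addNr ev0 ccX scale1r pair0 L0 Hpow cc_ev mul1r scalerA.
  by rewrite -exprnN divff ?scale1r // expf_neq0.
- move=> i j nij a b Ha Hb.
  have LinP : forall l O, O \in [:: Ho l; HIo l; Xo l; Yo d l] -> Lin l O.
    move=> l O; rewrite !inE => /or4P [] /eqP ->.
    + by exists 1, 0, 1, 0, 0, 0; rewrite scale0r addr0 scale1r ev0.
    + by exists 1, 0, (-1), 0, 0, 0; rewrite scale0r addr0 scale1r ev0.
    + by exists 1, 1, 0, 0, 0, 0; rewrite scale0r addr0 scale1r ev0.
    + exists (q l ^+ d), (-1), d%:Z, (-1), (-1), 0.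
      by rewrite scaleN1r ev0.
  exact: Lin_comm nij (LinP _ _ Ha) (LinP _ _ Hb).
Qed.

Section Alg.
Variables (d : nat) (A : algType k).
Variables (x y h hi : 'I_n -> A).
Hypothesis rels : Arels d q x y h hi.

Lemma hhi i : h i * hi i = 1. Proof. by case: rels => H _; case: (H i). Qed.
Lemma hih i : hi i * h i = 1. Proof. by case: rels => H _; case: (H i). Qed.
Lemma xh i : x i * h i = q i *: (h i * x i).
Proof. by case: rels => _ [H _ _ _ _]; rewrite H scalerAl. Qed.
Lemma yh i : y i * h i = (q i)^-1 *: (h i * y i).
Proof. by case: rels => _ [_ H _ _ _]; rewrite H scalerAl. Qed.
Lemma xy i : x i * y i = q i ^+ d *: h i ^+ d - 1.
Proof. by case: rels => _ [_ _ H _ _]; rewrite H exprZn. Qed.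
Lemma yx i : y i * x i = h i ^+ d - 1.
Proof. by case: rels => _ [_ _ _ H _]; rewrite H. Qed.
Lemma cm i j a b : i != j -> a \in [:: h i; hi i; x i; y i] ->
  b \in [:: h j; hi j; x j; y j] -> a * b = b * a.
Proof. by move=> nij Ha Hb; case: rels => _ [_ _ _ _ H]; exact: H nij _ _ Ha Hb. Qed.

Lemma comm_pow (g a : A) c p : g * a = c *: (a * g) ->
  g * a ^+ p = c ^+ p *: (a ^+ p * g).
Proof.
move=> E; elim: p => [|p IH]; first by rewrite !expr0 mul1r mulr1 scale1r.
rewrite exprS mulrA E -scalerAl -[a * g * _]mulrA IH -scalerAr scalerA exprS mulrA.
by rewrite [c * _]mulrC.
Qed.

Lemma comm_powl (g a : A) c p : g * a = c *: (a * g) ->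
  g ^+ p * a = c ^+ p *: (a * g ^+ p).
Proof.
move=> E; elim: p => [|p IH]; first by rewrite !expr0 mul1r mulr1 scale1r.
rewrite exprSr -mulrA E -scalerAr [g ^+ p * (a * g)]mulrA IH -scalerAl scalerA -mulrA -exprSr.
by rewrite [in RHS]exprS.
Qed.

Lemma hx i : h i * x i = (q i)^-1 *: (x i * h i).
Proof. by rewrite xh scalerA mulVf // scale1r. Qed.
Lemma hy i : h i * y i = q i *: (y i * h i).
Proof. by rewrite yh scalerA divff // scale1r. Qed.
Lemma hix i : hi i * x i = q i *: (x i * hi i).
Proof.
rewrite -[hi i * x i]mulr1 -(hhi i) mulrA -[hi i * x i * h i]mulrA xh.
by rewrite -scalerAr -scalerAl mulrA hih mul1r.
Qed.
Lemma hiy i : hi i * y i = (q i)^-1 *: (y i * hi i).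
Proof.
rewrite -[hi i * y i]mulr1 -(hhi i) mulrA -[hi i * y i * h i]mulrA yh.
by rewrite -scalerAr -scalerAl mulrA hih mul1r.
Qed.

Definition xp i (z : int) : A :=
  match z with Posz p => x i ^+ p | Negz p => y i ^+ p.+1 end.
Definition hp i (z : int) : A := ipow (h i) (hi i) z.

Lemma hpS i z : hp i (z + 1) = h i * hp i z.
Proof.
case: z => [p|p]; first by rewrite /hp /= -exprS addn1.
case: p => [|p]; first by rewrite /hp /= expr1 hhi.
rewrite /hp (_ : Negz p.+1 + 1 = Negz p); last by rewrite !NegzE; lia.
by rewrite /= [hi i ^+ p.+2]exprS mulrA hhi mul1r.
Qed.

Lemma hpP i z : hp i (z - 1) = hi i * hp i z.
Proof.
case: z => [p|p]; last first.
  by rewrite /hp (_ : Negz p - 1 = Negz p.+1) /= -?exprS // !NegzE; lia.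
case: p => [|p]; first by rewrite /hp /= mulr1 expr1.
rewrite /hp (_ : Posz p.+1 - 1 = Posz p) /=; last by lia.
by rewrite exprS mulrA hih mul1r.
Qed.

Lemma hpD i z m : hp i (z + m%:Z) = h i ^+ m * hp i z.
Proof.
elim: m => [|m IH]; first by rewrite addr0 expr0 mul1r.
by rewrite -[in LHS]addn1 PoszD addrA hpS IH exprS mulrA.
Qed.


Lemma xpN i (p : nat) : xp i (- p%:Z) = y i ^+ p.
Proof. by case: p => [|p] //=; rewrite expr0. Qed.

Lemma h_xp i a : exists c, h i * xp i a = c *: (xp i a * h i).
Proof.
case: a => [p|p] /=.
  by exists ((q i)^-1 ^+ p); apply: comm_pow; apply: hx.
by exists (q i ^+ p.+1); apply: comm_pow; apply: hy.
Qed.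
Lemma hi_xp i a : exists c, hi i * xp i a = c *: (xp i a * hi i).
Proof.
case: a => [p|p] /=.
  by exists (q i ^+ p); apply: comm_pow; apply: hix.
by exists ((q i)^-1 ^+ p.+1); apply: comm_pow; apply: hiy.
Qed.

Definition T2 i (w : A) := exists c1 a1 m1 c2 a2 m2,
  w = c1 *: (xp i a1 * hp i m1) + c2 *: (xp i a2 * hp i m2).

Lemma T2_1 i c a m : T2 i (c *: (xp i a * hp i m)).
Proof. by exists c, a, m, 0, a, m; rewrite scale0r addr0. Qed.

Lemma gen_h i a m : T2 i (h i * (xp i a * hp i m)).
Proof.
have [c E] := h_xp i a.
by rewrite mulrA E -scalerAl -mulrA -hpS; apply: T2_1.
Qed.
Lemma gen_hi i a m : T2 i (hi i * (xp i a * hp i m)).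
Proof.
have [c E] := hi_xp i a.
by rewrite mulrA E -scalerAl -mulrA -hpP; apply: T2_1.
Qed.
Lemma gen_x i a m : T2 i (x i * (xp i a * hp i m)).
Proof.
case: a => [p|p].
  by rewrite mulrA /= -exprS -(scale1r (x i ^+ p.+1 * _)); apply: (T2_1 _ _ (Posz p.+1)).
rewrite mulrA /= exprS mulrA xy mulrBl mul1r -scalerAl.
have [c E] : exists c, h i ^+ d * y i ^+ p = c *: (y i ^+ p * h i ^+ d).
  by exists ((q i ^+ d) ^+ p); apply: comm_pow; apply: comm_powl; apply: hy.
rewrite E scalerA mulrBl -scalerAl -[y i ^+ p * h i ^+ d * _]mulrA -hpD -!xpN.
by exists (q i ^+ d * c), (- p%:Z), (m + d%:Z), (-1), (- p%:Z), m; rewrite scaleN1r.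
Qed.
Lemma gen_y i a m : T2 i (y i * (xp i a * hp i m)).
Proof.
case: a => [p|p]; last first.
  by rewrite mulrA /= -exprS -(scale1r (y i ^+ p.+2 * _)); apply: (T2_1 _ _ (Negz p.+1)).
case: p => [|p].
  by rewrite /= expr0 mul1r -(scale1r (y i * _)) -(expr1 (y i)); apply: (T2_1 _ _ (Negz 0)).
rewrite mulrA /= exprS mulrA yx mulrBl mul1r.
have [c E] : exists c, h i ^+ d * x i ^+ p = c *: (x i ^+ p * h i ^+ d).
  by exists (((q i)^-1 ^+ d) ^+ p); apply: comm_pow; apply: comm_powl; apply: hx.
rewrite E mulrBl -scalerAl -[x i ^+ p * h i ^+ d * _]mulrA -hpD.
by exists c, (Posz p), (m + d%:Z), (-1), (Posz p), m; rewrite scaleN1r.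
Qed.

Definition Fm (f : W) i := xp i (f.1 i) * hp i (f.2 i).
Definition N (f : W) := \prod_(i < n) Fm f i.
Definition Span (w : A) := exists l : seq (k * W), w = \sum_(p <- l) p.1 *: N p.2.

Lemma comm_xp g i a : GRing.comm g (x i) -> GRing.comm g (y i) -> GRing.comm g (xp i a).
Proof. by move=> cx cy; case: a => p /=; apply: commrX. Qed.
Lemma comm_hp g i a : GRing.comm g (h i) -> GRing.comm g (hi i) -> GRing.comm g (hp i a).
Proof. by move=> cx cy; case: a => p /=; apply: commrX. Qed.

Lemma comm_gen_F j i f g : i != j -> g \in [:: h j; hi j; x j; y j] ->
  GRing.comm g (Fm f i).
Proof.
move=> nij Hg; have c b : b \in [:: h i; hi i; x i; y i] -> GRing.comm g b.
  by move=> Hb; apply: (cm _ Hg Hb); rewrite eq_sym.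
apply: commrM; [apply: comm_xp|apply: comm_hp]; apply: c; by rewrite !inE eqxx ?orbT.
Qed.

Lemma mul_prod_upd (g : A) j (G : 'I_n -> A) (r : seq 'I_n) : uniq r -> j \in r ->
  (forall i, i != j -> GRing.comm g (G i)) ->
  g * \prod_(i <- r) G i = \prod_(i <- r) (if i == j then g * G i else G i).
Proof.
move=> + + cG; elim: r => [//|i r IH] /= /andP [ni ur] Hj.
rewrite !big_cons; case: (eqVneq i j) => [E|nij].
  subst i; rewrite mulrA; congr (_ * _); apply: eq_big_seq => l Hl.
  by case: eqP => // E; move: ni; rewrite -E Hl.
move: Hj; rewrite inE eq_sym (negbTE nij) /= => Hj.
by rewrite mulrA (cG _ nij) -mulrA IH.
Qed.

Lemma prod_lin2 j (r : seq 'I_n) (G : 'I_n -> A) c1 c2 (P1 P2 : A) : uniq r -> j \in r ->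
  \prod_(i <- r) (if i == j then c1 *: P1 + c2 *: P2 else G i) =
  c1 *: \prod_(i <- r) (if i == j then P1 else G i) +
  c2 *: \prod_(i <- r) (if i == j then P2 else G i).
Proof.
elim: r => [//|i r IH] /= /andP [ni ur] Hj.
rewrite !big_cons; case: (eqVneq i j) => [E|nij].
  subst i; rewrite mulrDl -!scalerAl.
  have e : forall P, \prod_(l <- r) (if l == j then P else G l) = \prod_(l <- r) G l.
    move=> P; apply: eq_big_seq => l Hl.
    by case: eqP => // E; move: ni; rewrite -E Hl.
  by rewrite !e.
move: Hj; rewrite inE eq_sym (negbTE nij) /= => Hj.
by rewrite IH // mulrDr -!scalerAr.
Qed.

Definition upd (f : W) j (a m : int) : W :=
  ([ffun i => if i == j then a else f.1 i], [ffun i => if i == j then m else f.2 i]).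

Lemma N_upd f j a m :
  \prod_(i < n) (if i == j then xp j a * hp j m else Fm f i) = N (upd f j a m).
Proof.
apply: eq_bigr => i _; rewrite /Fm !ffunE; by case: eqP => // ->.
Qed.

Lemma Span_N f : Span (N f).
Proof. by exists [:: (1, f)]; rewrite big_seq1 scale1r. Qed.
Lemma Span_lin c u v : Span u -> Span v -> Span (c *: u + v).
Proof.
case=> l1 -> [l2 ->]; exists ([seq (c * p.1, p.2) | p <- l1] ++ l2).
rewrite big_cat big_map scaler_sumr; congr (_ + _); apply: eq_bigr => p _.
by rewrite scalerA.
Qed.
Lemma Span0 : Span 0.
Proof. by exists [::]; rewrite big_nil. Qed.
Lemma Span_sum (l : seq (k * W)) (G : W -> A) :
  (forall f, Span (G f)) -> Span (\sum_(p <- l) p.1 *: G p.2).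
Proof.
move=> HG; elim: l => [|p l IH]; first by rewrite big_nil; apply: Span0.
by rewrite big_cons; apply: Span_lin.
Qed.

Lemma gen_span j g f : g \in [:: h j; hi j; x j; y j] -> Span (g * N f).
Proof.
move=> Hg.
have T : T2 j (g * Fm f j).
  move: Hg; rewrite !inE => /or4P [] /eqP ->;
  [apply: gen_h|apply: gen_hi|apply: gen_x|apply: gen_y].
case: T => [c1 [a1 [m1 [c2 [a2 [m2 E]]]]]].
rewrite /N (@mul_prod_upd g j _ _ (index_enum_uniq _) (mem_index_enum _)); last first.
  by move=> i nij; exact: (comm_gen_F f nij Hg).
rewrite (eq_bigr (fun i => if i == j then c1 *: (xp j a1 * hp j m1) +
    c2 *: (xp j a2 * hp j m2) else Fm f i)); last first.
  by move=> i _; case: eqP => // ->.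
rewrite (prod_lin2 _ _ _ _ _ (index_enum_uniq _) (mem_index_enum _)).
rewrite (N_upd f j a1 m1) (N_upd f j a2 m2).
exists [:: (c1, upd f j a1 m1); (c2, upd f j a2 m2)].
by rewrite big_cons big_seq1.
Qed.

Lemma N0 : N 0 = 1.
Proof. by rewrite /N big1 // => i _; rewrite /Fm !ffunE /= expr0 mul1r. Qed.

Lemma Span_all (hA : is_A d q x y h hi) : forall w, Span w.
Proof.
pose P w := forall f, Span (w * N f).
have P1 : P 1 by move=> f; rewrite mul1r; apply: Span_N.
have Plin : forall c u v, P u -> P v -> P (c *: u + v).
  by move=> c u v Pu Pv f; rewrite mulrDl -scalerAl; apply: Span_lin.
have Pmul : forall u v, P u -> P v -> P (u * v).
  move=> u v Pu Pv f; have [l E] := Pv f.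
  rewrite -mulrA E mulr_sumr.
  under eq_bigr do rewrite -scalerAr.
  exact: (@Span_sum l (fun f => u * N f) (fun f => Pu f)).
have Pg : forall i, [/\ P (x i), P (y i), P (h i) & P (hi i)].
  by move=> i; split => f; apply: (gen_span (j := i)); rewrite !inE eqxx ?orbT.
move=> w; have := @gen_all k A P P1 Plin Pmul n d q x y h hi hA Pg w.
by move/(_ 0); rewrite N0 mulr1.
Qed.

Section Phi.
Variable Phi : A -> Op k W.
Hypothesis Phih : alg_hom Phi.
Hypothesis Phig : forall i, [/\ Phi (x i) = Xo i, Phi (y i) = Yo d i,
  Phi (h i) = Ho i & Phi (hi i) = HIo i].
Hypothesis hd : (0 < d)%N.

Lemma Phi1 : Phi 1 = 1. Proof. by case: Phih. Qed.
Lemma PhiD a b : Phi (a + b) = Phi a + Phi b. Proof. by case: Phih. Qed.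
Lemma PhiM a b : Phi (a * b) = Phi a * Phi b. Proof. by case: Phih. Qed.
Lemma PhiZ c a : Phi (c *: a) = c *: Phi a. Proof. by case: Phih. Qed.
Lemma Phi0 : Phi 0 = 0.
Proof. by apply: (@addrI _ (Phi 0)); rewrite -PhiD !addr0. Qed.
Lemma Phi_sum (I : Type) (r : seq I) (G : I -> A) :
  Phi (\sum_(i <- r) G i) = \sum_(i <- r) Phi (G i).
Proof. exact: (big_morph Phi PhiD Phi0). Qed.
Lemma Phi_prod (I : Type) (r : seq I) (G : I -> A) :
  Phi (\prod_(i <- r) G i) = \prod_(i <- r) Phi (G i).
Proof. exact: (big_morph Phi PhiM Phi1). Qed.
Lemma PhiX a m : Phi (a ^+ m) = Phi a ^+ m.
Proof. by elim: m => [|m IH]; rewrite ?expr0 ?Phi1 // !exprS PhiM IH. Qed.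

Lemma Fin_Phi (hA : is_A d q x y h hi) : forall w, Fin (Phi w).
Proof.
pose P w := Fin (Phi w).
have P1 : P 1 by rewrite /P Phi1; apply: Fin1.
have Plin : forall c u v, P u -> P v -> P (c *: u + v).
  by move=> c u v Pu Pv; rewrite /P PhiD PhiZ; apply: FinD => //; apply: FinZ.
have Pmul : forall u v, P u -> P v -> P (u * v).
  by move=> u v Pu Pv; rewrite /P PhiM; apply: FinM.
have Pg : forall i, [/\ P (x i), P (y i), P (h i) & P (hi i)].
  move=> i; case: (Phig i) => e1 e2 e3 e4; rewrite /P e1 e2 e3 e4; split;
    try apply: FinL.
  by apply: FinD; [apply: FinZ; apply: FinL | apply: FinN; apply: FinL].
exact: (@gen_all k A P P1 Plin Pmul n d q x y h hi hA Pg).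
Qed.

Lemma Xpow i p : Xo i ^+ p = L (ev i p%:Z, 0).
Proof.
elim: p => [|p IH]; first by rewrite expr0 ev0 pair0 L0.
by rewrite exprS IH /Xo LM ccX scale1r pairD addr0 -evD intS.
Qed.
Lemma HIpow i p : HIo i ^+ p = L (0, ev i (- p%:Z)).
Proof.
elim: p => [|p IH]; first by rewrite expr0 oppr0 ev0 pair0 L0.
rewrite exprS IH /HIo LM ccH scale1r pairD addr0 -evD intS; congr (L (_, ev i _)).
by rewrite opprD.
Qed.

Lemma Box_eq O a m M a' m' M' : Box O a m M -> a = a' -> m = m' -> M = M' ->
  Box O a' m' M'.
Proof. by move=> B <- <- <-. Qed.

Lemma coefN O w : coef (- O) w = - coef O w.
Proof. by rewrite -scaleN1r coefZ mulN1r. Qed.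

Lemma ev_neq0 i z : z != 0 -> ev i z != 0.
Proof.
move=> nz; apply/eqP => /ffunP /(_ i); rewrite !ffunE eqxx => E.
by move: nz; rewrite E eqxx.
Qed.

Lemma Box_Y i : Box (Yo d i) (ev i (-1)) 0 (ev i d%:Z).
Proof.
have dz : d%:Z != 0 by rewrite eqz_nat -lt0n.
have ne : ((ev i (-1), ev i d%:Z) : W) != (ev i (-1), 0).
  by apply/eqP => [[]] /eqP; apply/negP; apply: ev_neq0.
have cY w : coef (Yo d i) w = (if w == (ev i (-1), ev i d%:Z) then q i ^+ d else 0)
    - (if w == (ev i (-1), 0) then 1 else 0).
  by rewrite /Yo coefD coefN !coefZL -[L (ev i (-1), 0)]scale1r coefZL.
have evge : forall l, 0 <= ev i d%:Z l by move=> l; rewrite ffunE; case: eqP.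
split.
- by apply: FinD; [apply: FinZ; apply: FinL | apply: FinN; apply: FinL].
- move=> w; rewrite cY.
  case: (w =P (ev i (-1), ev i d%:Z)) => [->|_].
    by move=> _; split => // l /=; rewrite !ffunE; case: eqP => _; lia.
  case: (w =P (ev i (-1), 0)) => [->|_]; last by rewrite subrr eqxx.
  by move=> _; split => // l /=; rewrite !ffunE; case: eqP => _; lia.
- have ne' := ne; rewrite eq_sym in ne'; rewrite cY eqxx (negbTE ne').
  by rewrite sub0r oppr_eq0 oner_eq0.
- by rewrite cY eqxx (negbTE ne) subr0 expf_neq0.
Qed.

Lemma Box_pow O a m M p : Box O a m M ->
  Box (O ^+ p.+1) (a *+ p.+1) (m *+ p.+1) (M *+ p.+1).
Proof.
move=> B; elim: p => [|p IH]; first by rewrite expr1 !mulr1n.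
rewrite exprS [a *+ _]mulrS [m *+ _]mulrS [M *+ _]mulrS.
exact: Box_mul.
Qed.

Lemma evMn i z p : ev i z *+ p = ev i (z *+ p).
Proof. by apply/ffunP => l; rewrite ffunMnE !ffunE; case: eqP => // _; rewrite mul0rn. Qed.

Definition Dz (a : int) : int := match a with Posz _ => 0 | Negz p => (d * p.+1)%N%:Z end.

Lemma Box_xp i a : Box (Phi (xp i a)) (ev i a) 0 (ev i (Dz a)).
Proof.
case: a => [p|p] /=.
  rewrite PhiX; case: (Phig i) => -> _ _ _; rewrite Xpow -[L _]scale1r.
  by apply: (Box_eq (Box_L _ (oner_neq0 k))) => //=; rewrite ev0.
rewrite PhiX; case: (Phig i) => _ -> _ _.
apply: (Box_eq (Box_pow p (Box_Y i))); rewrite ?evMn //.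
- by congr ev; rewrite NegzE mulNrn natz.
- by rewrite mul0rn.
- by congr ev; rewrite -mulr_natr natz PoszM.
Qed.

Lemma Box_hp i m : Box (Phi (hp i m)) 0 (ev i m) (ev i m).
Proof.
case: m => [p|p] /=.
  rewrite PhiX; case: (Phig i) => _ _ -> _; rewrite Hpow -[L _]scale1r.
  by apply: (Box_eq (Box_L _ (oner_neq0 k))).
rewrite PhiX; case: (Phig i) => _ _ _ ->; rewrite HIpow -[L _]scale1r.
by apply: (Box_eq (Box_L _ (oner_neq0 k))) => //=; rewrite NegzE.
Qed.

Lemma Box_Fm f i : Box (Phi (Fm f i)) (ev i (f.1 i)) (ev i (f.2 i))
  (ev i (Dz (f.1 i) + f.2 i)).
Proof.
rewrite /Fm PhiM; apply: (Box_eq (Box_mul (Box_xp i _) (Box_hp i _))).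
- by rewrite addr0.
- by rewrite add0r.
- by rewrite evD.
Qed.

Lemma Box_prod (r : seq 'I_n) (G : 'I_n -> Op k W) (a m M : 'I_n -> FF) :
  (forall i, Box (G i) (a i) (m i) (M i)) ->
  Box (\prod_(i <- r) G i) (\sum_(i <- r) a i) (\sum_(i <- r) m i) (\sum_(i <- r) M i).
Proof.
move=> HB; elim: r => [|i r IH]; first by rewrite !big_nil; apply: Box_1.
by rewrite !big_cons; apply: Box_mul.
Qed.

Lemma sum_ev (g : FF) : \sum_(i < n) ev i (g i) = g.
Proof.
apply/ffunP => j; rewrite sum_ffunE (bigD1 j) //= ffunE eqxx big1 ?addr0 // => i nij.
by rewrite ffunE eq_sym (negbTE nij).
Qed.

Definition Mx (f : W) : FF := [ffun i => Dz (f.1 i) + f.2 i].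

Lemma Box_N f : Box (Phi (N f)) f.1 f.2 (Mx f).
Proof.
rewrite /N Phi_prod.
apply: (Box_eq (Box_prod (index_enum _) (fun i => Box_Fm f i))).
- exact: (sum_ev f.1).
- exact: (sum_ev f.2).
- by rewrite -[RHS](sum_ev (Mx f)); apply: eq_bigr => i _; rewrite ffunE.
Qed.

Definition sig (g : FF) : int := \sum_(i < n) g i.

Lemma sig_le (a b : FF) : (forall i, a i <= b i) -> sig a <= sig b.
Proof. by move=> H; apply: ler_sum => i _. Qed.

Lemma sum0_nonneg (F : 'I_n -> int) : (forall i, 0 <= F i) ->
  \sum_(i < n) F i = 0 -> forall i, F i = 0.
Proof. by move=> H E i; apply: (psumr_eq0P (P := predT)) => // j _; apply: H. Qed.

Lemma sig_eq (a b : FF) : (forall i, a i <= b i) -> sig a = sig b -> a = b.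
Proof.
move=> H E.
have E0 : \sum_(i < n) (b i - a i) = 0 by rewrite sumrB -/(sig b) -/(sig a) E subrr.
have H' : forall i, 0 <= b i - a i by move=> i; rewrite subr_ge0.
have Z := sum0_nonneg H' E0.
by apply/ffunP => i; apply/eqP; rewrite eq_sym -subr_eq0 Z.
Qed.

Lemma ex_min_key (T : eqType) (key : T -> int) (S : seq T) : S != [::] ->
  exists m, m \in S /\ forall s, s \in S -> key m <= key s.
Proof.
elim: S => [//|a S IH] _.
case: (eqVneq S [::]) => [->|SN].
  by exists a; split; [rewrite mem_seq1 | move=> s; rewrite mem_seq1 => /eqP ->].
have [m [Hm Hs]] := IH SN.
case: (lerP (key a) (key m)) => c.
- exists a; split; first by rewrite inE eqxx.
  move=> s; rewrite inE => /orP [/eqP ->//|/Hs]; by apply: le_trans.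
- exists m; split; first by rewrite inE Hm orbT.
  by move=> s; rewrite inE => /orP [/eqP ->|/Hs //]; rewrite le_eqVlt c orbT.
Qed.

Lemma Dz_ge0 a : 0 <= Dz a. Proof. by case: a. Qed.
Lemma Dz_eq0 a : Dz a = 0 -> 0 <= a.
Proof. by case: a => // p /= /eqP; rewrite eqz_nat muln_eq0 orbF => /eqP d0; move: hd; rewrite d0. Qed.

Lemma uniq_single (T : eqType) (U : seq T) s0 : uniq U -> U != [::] ->
  (forall f, f \in U -> f = s0) -> U = [:: s0].
Proof.
case: U => [//|a U] /= /andP [na uU] _ H.
have -> : a = s0 by apply: H; rewrite inE eqxx.
case: U {uU} na H => [//|b U] na H.
exfalso; move: na; rewrite inE.
by rewrite (H a) ?inE ?eqxx // (H b) ?inE ?eqxx ?orbT.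
Qed.

Lemma single_shape (hA : is_A d q x y h hi) (w : A) s0 : w != 0 ->
  (forall z, coef (Phi w) z != 0 -> z = s0) ->
  exists C, [/\ C != 0, w = C *: N s0 & forall i, 0 <= s0.1 i].
Proof.
move=> nw Hs.
have [l E] := Span_all hA w.
rewrite regroup in E.
set U0 := undup (map snd l) in E.
set C := cf l in E.
set U := [seq s <- U0 | C s != 0].
have EU : w = \sum_(f <- U) C f *: N f.
  rewrite E big_filter [RHS]big_mkcond /=; apply: eq_bigr => f _.
  by case: eqVneq => [->|]; rewrite ?scale0r.
have uU : uniq U by rewrite filter_uniq // undup_uniq.
have CU f : f \in U -> C f != 0 by rewrite mem_filter => /andP [].
have cw z : coef (Phi w) z = \sum_(f <- U) C f * coef (Phi (N f)) z.
  by rewrite EU Phi_sum coef_sum; apply: eq_bigr => f _; rewrite PhiZ coefZ.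
have UN : U != [::].
  by apply: contra_neq nw => UE; rewrite EU UE big_nil.
have claim_min : forall f, f \in U -> (forall g, g \in U -> g.1 = f.1 -> sig f.2 <= sig g.2) ->
    f = s0.
  move=> f fU Hm.
  have : coef (Phi w) (f.1, f.2) != 0.
    rewrite cw (bigD1_seq f) //= big1_seq ?addr0.
      by rewrite mulf_neq0 ?CU //; case: (Box_N f).
    move=> g /andP [ngf gU].
    case: (eqVneq (coef (Phi (N g)) (f.1, f.2)) 0) => [->|nz]; first by rewrite mulr0.
    case: (Box_N g) => _ S _ _; have [/= e1 b] := S _ nz.
    have le : forall i, g.2 i <= f.2 i by move=> i; case/andP: (b i).
    have eq2 : g.2 = f.2.
      apply: sig_eq => //; apply/eqP; rewrite eq_le sig_le //=.
      by apply: Hm => //.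
    by move: ngf; rewrite [g]surjective_pairing [f]surjective_pairing e1 eq2 eqxx.
  by move/Hs; rewrite -surjective_pairing.
have claim_max : forall f, f \in U -> (forall g, g \in U -> g.1 = f.1 -> sig g.2 <= sig f.2) ->
    (f.1, Mx f) = s0.
  move=> f fU Hm.
  have : coef (Phi w) (f.1, Mx f) != 0.
    rewrite cw (bigD1_seq f) //= big1_seq ?addr0.
      by rewrite mulf_neq0 ?CU //; case: (Box_N f).
    move=> g /andP [ngf gU].
    case: (eqVneq (coef (Phi (N g)) (f.1, Mx f)) 0) => [->|nz]; first by rewrite mulr0.
    case: (Box_N g) => _ S _ _; have [/= e1 b] := S _ nz.
    have le : forall i, f.2 i <= g.2 i.
      move=> i; case/andP: (b i) => _; rewrite !ffunE e1; by rewrite lerD2l.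
    have eq2 : f.2 = g.2.
      apply: sig_eq => //; apply/eqP; rewrite eq_le sig_le //=.
      by apply: Hm => //.
    by move: ngf; rewrite [g]surjective_pairing [f]surjective_pairing e1 eq2 eqxx.
  by move/Hs.
have all_s0 : forall f, f \in U -> f = s0 /\ forall i, Dz (f.1 i) = 0.
  move=> f fU.
  set K := [seq g <- U | g.1 == f.1].
  have KN : K != [::].
    apply/eqP => KE; have : f \in K by rewrite mem_filter eqxx fU.
    by rewrite KE.
  have memK g : (g \in K) = (g.1 == f.1) && (g \in U) by rewrite mem_filter.
  have fK : f \in K by rewrite memK eqxx fU.
  have [g1 [g1K g1m]] := ex_min_key (fun g : W => sig g.2) KN.
  have [g2 [g2K g2m]] := ex_min_key (fun g : W => - sig g.2) KN.
  move: (g1K) (g2K); rewrite !memK => /andP [/eqP g1f g1U] /andP [/eqP g2f g2U].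
  have e1 : g1 = s0.
    apply: claim_min => // g gU ge; apply: g1m; by rewrite memK ge g1f eqxx gU.
  have e2 : (g2.1, Mx g2) = s0.
    apply: claim_max => // g gU ge; rewrite -lerN2; apply: g2m.
    by rewrite memK ge g2f eqxx gU.
  have e3 : g1.2 = Mx g2 by rewrite -e2 in e1; rewrite e1.
  have sM : sig (Mx g2) = \sum_(i < n) Dz (f.1 i) + sig g2.2.
    rewrite /sig -big_split /=; apply: eq_bigr => i _; by rewrite ffunE g2f.
  have SD0 : 0 <= \sum_(i < n) Dz (f.1 i) by apply: sumr_ge0 => i _; apply: Dz_ge0.
  have a1 := g1m f fK; have a2 := g2m f fK; rewrite /= lerN2 in a2.
  rewrite /= e3 sM in a1.
  have [SDz sf] : \sum_(i < n) Dz (f.1 i) = 0 /\ sig f.2 = sig g1.2.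
    rewrite e3 sM; move: a1 a2 SD0; move: (\sum_(i < n) Dz (f.1 i)) (sig f.2) (sig g2.2).
    by move=> D b c; lia.
  split.
    apply: claim_min => // g gU ge; rewrite sf; apply: g1m.
    by rewrite memK ge eqxx gU.
  by apply: sum0_nonneg => // i; apply: Dz_ge0.
have U1 : U = [:: s0] by apply: uniq_single => // f /all_s0 [].
have s0U : s0 \in U by rewrite U1 inE eqxx.
exists (C s0); split.
- exact: CU.
- by rewrite EU U1 big_seq1.
- by move=> i; apply: Dz_eq0; case: (all_s0 _ s0U).
Qed.



Lemma unit_form (hA : is_A d q x y h hi) u v : u * v = 1 -> v * u = 1 ->
  exists C (m : FF), C != 0 /\ u = C *: N (0, m).
Proof.
move=> uv vu.
have Fu := Fin_Phi hA u; have Fv := Fin_Phi hA v.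
have E : Phi u * Phi v = 1 by rewrite -PhiM uv Phi1.
have [s0 [t0 [st _ Su Sv]]] := unit_mono Fu Fv E.
have nu : u != 0 by apply: contra_eq_neq uv => ->; rewrite mul0r eq_sym oner_neq0.
have nv : v != 0 by apply: contra_eq_neq uv => ->; rewrite mulr0 eq_sym oner_neq0.
have [C [nC Eu Pu]] := single_shape hA nu Su.
have [_ [_ _ Pv]] := single_shape hA nv Sv.
have s01 : s0.1 = 0.
  apply/ffunP => i; have := congr1 (fun z : W => z.1 i) st; rewrite /= !ffunE.
  have := Pu i; have := Pv i; move: (s0.1 i) (t0.1 i) => a b; lia.
exists C, s0.2; split => //; by rewrite Eu [s0]surjective_pairing s01.
Qed.
End Phi.
End Alg.
End Tw.

Theorem lemma2p2 (k : fieldType) (n d : nat) (q : 'I_n -> k)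
    (hn : (0 < n)%N) (hd : (0 < d)%N)
    (hq0 : forall i, q i != 0) (hqd : forall i, q i ^+ d != 1)
    (A : algType k) (x y h hi : 'I_n -> A) (hA : is_A d q x y h hi)
    (u : A) (hu : exists v : A, u * v = 1 /\ v * u = 1) :
  exists (gamma : k) (m : 'I_n -> int),
    gamma != 0 /\ u = gamma *: \prod_(i < n) ipow (h i) (hi i) (m i).
Proof.
have rels : Arels d q x y h hi by case: hA.
have hA' := hA.
case: hA' => _ hex _.
have [Phi [Phih Phig]] := hex _ _ _ _ _ (model_rels hq0 d).
case: hu => v [uv vu].
have [C [m [nC Eu]]] := unit_form hq0 rels Phih Phig hd hA uv vu.
exists C, (fun i => m i); split => //.
rewrite Eu; congr (_ *: _); rewrite /N; apply: eq_bigr => i _.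
by rewrite /Fm ffunE /= expr0 mul1r.
Qed.
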